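(* Let $\Gamma_1,\Gamma_2$ be finite connected graphs, each having $1$ as an eigenvalue of its normalized Laplacian, with eigenfunctions $f^1$ on $\Gamma_1$ and $f^2$ on $\Gamma_2$. Assume $f^1(p_1)=f^2(p_2)$ for some vertices $p_1\in\Gamma_1$, $p_2\in\Gamma_2$. Let $\Gamma$ be the graph obtained from the disjoint union of $\Gamma_1$ and $\Gamma_2$ by identifying $p_1$ with $p_2$. Then $1$ is an eigenvalue of the normalized Laplacian of $\Gamma$, with an eigenfunction equal to $f^1$ on $\Gamma_1$ and to $f^2$ on $\Gamma_2$.
   Context: For a finite simple graph without isolated vertices, write $i\sim j$ for adjacency and $n_i$ for the degree of $i$. The normalized Laplacian acts on real functions $v$ on the vertices by $\Delta v(i)=v(i)-\frac{1}{n_i}\sum_{j\sim i}v(j)$; $\lambda$ is an eigenvalue with eigenfunction $u$ if $u\not\equiv 0$ and $\frac{1}{n_i}\sum_{j\sim i}u(j)=(1-\lambda)u(i)$ for all $i$. For $\lambda=1$ this says $\sum_{j\sim i}u(j)=0$ for all $i$. *)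

(* Defs.v *)
From mathcomp Require Import all_boot all_order all_algebra.
From mathcomp Require Import reals.
Set Implicit Arguments. Unset Strict Implicit. Unset Printing Implicit Defensive.
Import Order.TTheory GRing.Theory Num.Theory.
Local Open Scope ring_scope.

Definition simple_graph (T : finType) (E : rel T) : Prop :=
  symmetric E /\ irreflexive E.

Definition no_isolated (T : finType) (E : rel T) : Prop :=
  forall i : T, exists j, E i j.

Definition connected_graph (T : finType) (E : rel T) : Prop :=
  forall a b : T, connect E a b.

Definition deg (T : finType) (E : rel T) (i : T) : nat := #|[pred j | E i j]|.

Definition nlap_eigenfun (R : realType) (T : finType) (E : rel T)
    (lam : R) (u : T -> R) : Prop :=
  (exists i, u i != 0) /\
  forall i : T, (deg E i)%:R^-1 * (\sum_(j | E i j) u j) = (1 - lam) * u i.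

(* Wedge (one-point union) of two graphs, identifying p1 in T1 with p2 in T2.
   Vertex set: T1 + (T2 minus p2). *)
Definition wedge_vert (T1 T2 : finType) (p2 : T2) : finType :=
  (T1 + {x : T2 | x != p2})%type.

Definition wedge_inl (T1 T2 : finType) (p2 : T2) (a : T1) : wedge_vert T1 p2 := inl a.

Definition wedge_inr (T1 T2 : finType) (p1 : T1) (p2 : T2) (b : T2)
  : wedge_vert T1 p2 :=
  match insub b with Some y => inr y | None => inl p1 end.

Definition wedge_rel (T1 T2 : finType) (E1 : rel T1) (E2 : rel T2)
    (p1 : T1) (p2 : T2) : rel (wedge_vert T1 p2) :=
  fun u v =>
    [exists a, exists b, [&& u == wedge_inl p2 a, v == wedge_inl p2 b & E1 a b]]
    || [exists a, exists b,
         [&& u == wedge_inr p1 p2 a, v == wedge_inr p1 p2 b & E2 a b]].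

Arguments wedge_inl {T1 T2} p2 a.
Arguments wedge_inr {T1 T2} p1 p2 b.
Arguments wedge_rel {T1 T2} E1 E2 p1 p2 _ _.

(* Main.v *)
Require Import Defs.
From mathcomp Require Import all_boot all_order all_algebra.
From mathcomp Require Import reals.
Import Order.TTheory GRing.Theory Num.Theory.
Local Open Scope ring_scope.

Lemma sum_reindex (R : realType) (A B : finType) (g : A -> B) (P : pred A)
  (F : B -> R) : injective g ->
  \sum_(v | [exists b, (v == g b) && P b]) F v = \sum_(b | P b) F (g b).
Proof.
move=> ig.
transitivity (\sum_(v <- [seq g b | b in P]) F v); last by rewrite big_image.
rewrite big_uniq; last by rewrite map_inj_uniq // enum_uniq.
apply: eq_bigl => v.
apply/existsP/imageP.
  by case=> b /andP[/eqP -> Pb]; exists b.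
by case=> b Pb ->; exists b; rewrite eqxx.
Qed.

Theorem mainTheorem8 (R : realType) (T1 T2 : finType)
    (E1 : rel T1) (E2 : rel T2)
    (hs1 : simple_graph E1) (hs2 : simple_graph E2)
    (hn1 : no_isolated E1) (hn2 : no_isolated E2)
    (hc1 : connected_graph E1) (hc2 : connected_graph E2)
    (f1 : T1 -> R) (f2 : T2 -> R)
    (hf1 : nlap_eigenfun E1 1 f1) (hf2 : nlap_eigenfun E2 1 f2)
    (p1 : T1) (p2 : T2) (hp : f1 p1 = f2 p2) :
  exists f : wedge_vert T1 p2 -> R,
    nlap_eigenfun (wedge_rel E1 E2 p1 p2) 1 f /\
    (forall a : T1, f (wedge_inl p2 a) = f1 a) /\
    (forall b : T2, f (wedge_inr p1 p2 b) = f2 b).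
Proof.
pose f (v : wedge_vert T1 p2) : R :=
  match v with inl a => f1 a | inr y => f2 (val y) end.
have fr : forall b, f (wedge_inr p1 p2 b) = f2 b.
  move=> b; rewrite /wedge_inr; case: insubP => [y _ <- //|].
  by rewrite negbK => /eqP ->.
have inj1 : injective (wedge_inl (T1:=T1) p2) by move=> a b [].
have inj2 : injective (wedge_inr (T1:=T1) p1 p2).
  move=> a b; rewrite /wedge_inr.
  case: insubP => [y ya ey|]; case: insubP => [z zb ez|] //.
  - by case=> yz; rewrite -ey -ez yz.
  - by rewrite !negbK => /eqP -> /eqP ->.
have s1 : forall i, \sum_(j | E1 i j) f1 j = 0.
  move=> i; case: hf1 => _ /(_ i); rewrite subrr mul0r.
  have [d0|dn0] := eqVneq (deg E1 i) 0%N.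
    move=> _; apply: big_pred0 => j /=.
    by apply/negP => Eij; move: d0; rewrite /deg; move/eqP; rewrite -leqn0 leqNgt;
      move/negP; apply; apply/card_gt0P; exists j.
  by move/eqP; rewrite mulf_eq0 invr_eq0 pnatr_eq0 (negbTE dn0) /= => /eqP.
have s2 : forall i, \sum_(j | E2 i j) f2 j = 0.
  move=> i; case: hf2 => _ /(_ i); rewrite subrr mul0r.
  have [d0|dn0] := eqVneq (deg E2 i) 0%N.
    move=> _; apply: big_pred0 => j /=.
    by apply/negP => Eij; move: d0; rewrite /deg; move/eqP; rewrite -leqn0 leqNgt;
      move/negP; apply; apply/card_gt0P; exists j.
  by move/eqP; rewrite mulf_eq0 invr_eq0 pnatr_eq0 (negbTE dn0) /= => /eqP.
exists f; split; last by split.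
split.
  by case: hf1 => -[i fi] _; exists (inl i).
move=> u; rewrite subrr mul0r.
set P1 := fun v => [exists a, exists b, [&& u == wedge_inl p2 a,
                                           v == wedge_inl p2 b & E1 a b]].
set P2 := fun v => [exists a, exists b, [&& u == wedge_inr p1 p2 a,
                                           v == wedge_inr p1 p2 b & E2 a b]].
have S1 : \sum_(v | P1 v) f v = 0.
  case: u @P1 @P2 => [a|y] P1 P2.
    rewrite (eq_bigl (fun v => [exists b, (v == wedge_inl p2 b) && E1 a b])).
      by rewrite sum_reindex //; exact: s1.
    move=> v; rewrite /P1; apply/existsP/existsP.
      by case=> a' /existsP[b /and3P[/eqP [<-] vb e]]; exists b; rewrite vb.
    by case=> b /andP[vb e]; exists a; apply/existsP; exists b; rewrite eqxx vb.
  apply: big_pred0 => v; apply/existsP => -[a /existsP[b /and3P[//]]].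
have S2 : \sum_(v | P2 v) f v = 0.
  case: (boolP [exists c, u == wedge_inr p1 p2 c]) => [/existsP[c /eqP uc]|nc].
    rewrite (eq_bigl (fun v => [exists b, (v == wedge_inr p1 p2 b) && E2 c b])).
      by rewrite sum_reindex //; under eq_bigr do rewrite fr; exact: s2.
    move=> v; rewrite /P2 uc; apply/existsP/existsP.
      case=> a' /existsP[b /and3P[/eqP ca vb e]]; exists b.
      by rewrite vb (inj2 _ _ ca).
    by case=> b /andP[vb e]; exists c; apply/existsP; exists b; rewrite eqxx vb.
  apply: big_pred0 => v; apply/existsP => -[a /existsP[b /and3P[/eqP ua _ _]]].
  by move/negP: nc; apply; apply/existsP; exists a; rewrite ua.
have gl : forall x a, wedge_inr p1 p2 x = inl a -> x = p2.
  move=> x a; rewrite /wedge_inr; case: insubP => [//|].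
  by rewrite negbK => /eqP.
have dis : forall v, P1 v -> ~~ P2 v.
  move=> v /existsP[a /existsP[b /and3P[/eqP ua /eqP vb _]]].
  apply/existsP => -[a' /existsP[b' /and3P[/eqP ua' /eqP vb' e]]].
  have ha : a' = p2 by apply: (gl _ a); rewrite -ua' ua.
  have hb : b' = p2 by apply: (gl _ b); rewrite -vb' vb.
  by case: hs2 => _ irr; move: e; rewrite ha hb irr.
have wr : forall v, wedge_rel E1 E2 p1 p2 u v = P1 v || P2 v by [].
rewrite (bigID P1) /=.
rewrite (eq_bigl P1); last first.
  by move=> v; rewrite wr; case: (P1 v); rewrite ?andbF.
rewrite [X in _ + X](eq_bigl P2); last first.
  move=> v; rewrite wr.
  case E : (P1 v) => /=; last by rewrite andbT.
  by apply/esym/negbTE; apply: dis.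
by rewrite S1 S2 addr0 mulr0.
Qed.
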